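(* For every monoid $M$ there is a simple or $0$-simple monoid $N$ such that $\mathfrak{L}(\mathrm{Val},\mathrm{CF},M)=\mathfrak{L}(\mathrm{Val},\mathrm{CF},N)$.
   Context: An ideal of a semigroup $S$ is $I\subseteq S$ with $S^1IS^1\subseteq I$. $S$ is simple if it has no proper ideal; $S$ with a zero is $0$-simple if its only ideals are $\{0\}$ and $S$ and $SS\ne\{0\}$. A context-free valence grammar over a monoid $N$ is $(V,T,P,S,N)$ with nonterminals $V$, terminals $T$, start symbol $S$ and a finite set $P$ of rules $(A\to\alpha,n)$ with $A\in V$, $\alpha\in(V\cup T)^*$, $n\in N$. One step: $(w_1Aw_2,m)\Rightarrow(w_1\alpha w_2,mn)$ for a rule $(A\to\alpha,n)$. The generated language is $\{w\in T^*:(S,1)\Rightarrow^*(w,1)\}$. $\mathfrak{L}(\mathrm{Val},\mathrm{CF},N)$ is the family of languages generated by such grammars over $N$. *)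

(* Defs.v *)
From Stdlib Require Import Relations List.
From mathcomp Require Import all_boot.
Set Implicit Arguments. Unset Strict Implicit. Unset Printing Implicit Defensive.

Record AbsMonoid : Type := {
  mcar :> Type;
  mop : mcar -> mcar -> mcar;
  munit : mcar;
  mopA : forall x y z, mop x (mop y z) = mop (mop x y) z;
  mop1x : forall x, mop munit x = x;
  mopx1 : forall x, mop x munit = x }.

(* An ideal of a semigroup S: nonempty I with S^1 I S^1 ⊆ I (for a monoid, S^1 = S). *)
Definition is_ideal (M : AbsMonoid) (I : M -> Prop) : Prop :=
  (exists x, I x) /\ forall s x t, I x -> I (@mop M (@mop M s x) t).

Definition simple_monoid (M : AbsMonoid) : Prop :=
  forall I : M -> Prop, is_ideal I -> forall x, I x.

Definition is_zero (M : AbsMonoid) (z : M) : Prop :=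
  forall x, @mop M z x = z /\ @mop M x z = z.

Definition zero_simple_monoid (M : AbsMonoid) : Prop :=
  exists z : M, @is_zero M z /\
    (forall I : M -> Prop, is_ideal I -> (forall x, I x <-> x = z) \/ (forall x, I x)) /\
    (exists x y, @mop M x y <> z).

Record valence_grammar (M : AbsMonoid) (V T : finType) : Type := {
  vg_rules : list (V * seq (V + T)%type * mcar M)%type;
  vg_start : V }.

Definition vg_step (M : AbsMonoid) (V T : finType) (G : valence_grammar M V T)
  (c c' : (seq (V + T)%type * mcar M)%type) : Prop :=
  exists w1 w2 A alpha n,
    In (A, alpha, n) (vg_rules G) /\
    c = (w1 ++ inl A :: w2, c.2) /\
    c' = (w1 ++ alpha ++ w2, @mop M c.2 n).

Definition vg_language (M : AbsMonoid) (V T : finType) (G : valence_grammar M V T)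
  (w : seq T) : Prop :=
  clos_refl_trans _ (@vg_step M V T G)
    ([:: inl (vg_start G)], munit M) ([seq inr a | a <- w], munit M).

Definition in_Val_CF (M : AbsMonoid) (T : finType) (L : seq T -> Prop) : Prop :=
  exists (V : finType) (G : valence_grammar M V T),
    forall w, L w <-> vg_language G w.

Definition same_Val_CF (M N : AbsMonoid) : Prop :=
  forall (T : finType) (L : seq T -> Prop), in_Val_CF M L <-> in_Val_CF N L.

(* Main.v *)
Require Import Defs.
From mathcomp Require Import all_boot.
From Stdlib Require Import Relations List Classical ClassicalDescription ProofIrrelevance.

Section Sim.
Variables (M N : AbsMonoid) (phi : M -> N).
Hypothesis phiM : forall a b, phi (@mop M a b) = @mop N (phi a) (phi b).
Variables (V T : finType) (G : valence_grammar M V T) (H : valence_grammar N V T).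

Lemma sim_fwd :
  (forall A alpha x, In (A, alpha, x) (vg_rules G) -> In (A, alpha, phi x) (vg_rules H)) ->
  forall c c', clos_refl_trans _ (vg_step G) c c' ->
  clos_refl_trans _ (vg_step H) (c.1, phi c.2) (c'.1, phi c'.2).
Proof.
move=> hr c c'; elim => [x y [w1 [w2 [A [alpha [n [hin [e1 e2]]]]]]]|x|x y z _ IH1 _ IH2].
- apply: rt_step. exists w1, w2, A, alpha, (phi n); split; first by apply: hr.
  rewrite e2 /=; split; first by rewrite {1}e1.
  by rewrite phiM.
- by apply: rt_refl.
- by apply: rt_trans IH2.
Qed.

Variable z : N.
Hypothesis zabs : forall a, @mop N z a = z.
Hypothesis zabs' : forall a, @mop N a z = z.

Lemma zero_pres : forall x y, clos_refl_trans_1n _ (vg_step H) x y -> x.2 = z -> y.2 = z.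
Proof.
move=> x y; elim => // a b c [w1 [w2 [A [alpha [n [hin [e1 e2]]]]]]] _ IH ha.
by apply: IH; rewrite e2 /= ha zabs.
Qed.

Lemma sim_bwd :
  (forall A alpha nu, In (A, alpha, nu) (vg_rules H) ->
     nu = z \/ exists x, nu = phi x /\ In (A, alpha, x) (vg_rules G)) ->
  forall x y, clos_refl_trans_1n _ (vg_step H) x y -> y.2 <> z ->
  forall m, x.2 = phi m -> exists m', y.2 = phi m' /\
     clos_refl_trans _ (vg_step G) (x.1, m) (y.1, m').
Proof.
move=> hr x y; elim => [a|a b c [w1 [w2 [A [alpha [n [hin [e1 e2]]]]]]] hbc IH] hy m ha.
- exists m; split => //; exact: rt_refl.
- case: (hr _ _ _ hin) => [en|[x0 [en hin']]].
  + exfalso; apply: hy; apply: (@zero_pres _ _ hbc); by rewrite e2 /= en zabs'.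
  + have [m' [h1 h2]] := IH hy (@mop M m x0) (ltac:(by rewrite e2 /= ha en phiM)).
    exists m'; split => //.
    apply: rt_trans h2; apply: rt_step.
    exists w1, w2, A, alpha, x0; split => //; split => //.
    by rewrite {1}e1.
    by rewrite e2.
Qed.
End Sim.

Section Constr.
Variable M : AbsMonoid.

Definition J (a : M) : Prop := exists x y, @mop M (@mop M x a) y = munit M.

Lemma J1 : J (munit M).
Proof. by exists (munit M), (munit M); rewrite !mop1x. Qed.

Lemma JMl a b : J (@mop M a b) -> J a.
Proof. move=> [x [y e]]; exists x, (@mop M b y). by rewrite mopA -(mopA x a b). Qed.

Lemma JMr a b : J (@mop M a b) -> J b.
Proof. move=> [x [y e]]; exists (@mop M x a), y. by rewrite -(mopA x a b). Qed.

Definition Nc := {o : option M | match o with Some a => J a | None => True end}.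

Definition zN : Nc := exist _ None I.

Definition phi (m : M) : Nc :=
  match excluded_middle_informative (J m) with
  | left h => exist (fun o : option M => match o with Some a => J a | None => True end) (Some m) h
  | right _ => zN
  end.

Definition nmul (a b : Nc) : Nc :=
  match proj1_sig a, proj1_sig b with
  | Some x, Some y => phi (@mop M x y)
  | _, _ => zN
  end.

Lemma nmul_z a : nmul zN a = zN.
Proof. by []. Qed.

Lemma nmul_z' a : nmul a zN = zN.
Proof. by rewrite /nmul; case: (proj1_sig a). Qed.

Lemma phiJ {x} (h : J x) : phi x = exist _ (Some x) h.
Proof.
rewrite /phi; case: excluded_middle_informative => h' //.
by rewrite (proof_irrelevance _ h h').
Qed.

Lemma phinJ {x} : ~ J x -> phi x = zN.
Proof. by rewrite /phi; case: excluded_middle_informative. Qed.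

Lemma Ncases (a : Nc) : a = zN \/ exists x, J x /\ a = phi x.
Proof.
case: a => [[x|] h].
- right; exists x; split => //; by rewrite (phiJ h).
- left; by case: h.
Qed.

Lemma phiM a b : phi (@mop M a b) = nmul (phi a) (phi b).
Proof.
case: (classic (J a)) => ha; last first.
  by rewrite (phinJ ha) nmul_z phinJ // => /JMl.
case: (classic (J b)) => hb; last first.
  by rewrite (phinJ hb) nmul_z' phinJ // => /JMr.
by rewrite (phiJ ha) (phiJ hb).
Qed.

Lemma nmulA : forall x y z, nmul x (nmul y z) = nmul (nmul x y) z.
Proof.
move=> a b c.
case: (Ncases a) => [->|[x [_ ->]]]; first by rewrite !nmul_z.
case: (Ncases b) => [->|[y [_ ->]]]; first by rewrite !nmul_z nmul_z' nmul_z.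
case: (Ncases c) => [->|[w [_ ->]]]; first by rewrite !nmul_z'.
by rewrite -!phiM mopA.
Qed.

Definition uN := phi (munit M).

Lemma nmul1x : forall x, nmul uN x = x.
Proof.
move=> a; case: (Ncases a) => [->|[x [_ ->]]]; first by rewrite nmul_z'.
by rewrite /uN -phiM mop1x.
Qed.

Lemma nmulx1 : forall x, nmul x uN = x.
Proof.
move=> a; case: (Ncases a) => [->|[x [_ ->]]]; first by rewrite nmul_z.
by rewrite /uN -phiM mopx1.
Qed.

Definition NM : AbsMonoid := Build_AbsMonoid nmulA nmul1x nmulx1.

Lemma phi_1 {m} : phi m = uN -> m = munit M.
Proof.
rewrite /uN (phiJ J1) /phi; case: excluded_middle_informative => h //.
by case.
Qed.

Lemma uNz : uN <> zN.
Proof. by rewrite /uN (phiJ J1). Qed.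

Lemma NM_zs : zero_simple_monoid NM.
Proof.
exists zN; split; first by move=> x; split; [exact: nmul_z | exact: nmul_z'].
split; last by exists uN, uN => /=; rewrite nmul1x; exact: uNz.
move=> I [[a0 Ia0] hI].
case: (classic (exists a, I a /\ a <> zN)) => [[a [Ia az]]|hn].
- right; move=> b.
  case: (Ncases a) => [//|[x [[x' [y' e]] ea]]].
  have Iu : I uN.
    have := hI (phi x') a (phi y') Ia; rewrite ea /= -!phiM e //.
  by have := hI b uN uN Iu => /=; rewrite !nmulx1.
- left => x; split.
  + move=> Ix; apply: NNPP => nx; apply: hn; by exists x.
  + move=> ->; case: (classic (a0 = zN)) => [<-//|na]; exfalso; apply: hn; by exists a0.
Qed.

Definition mapG (V T : finType) (G : valence_grammar M V T) : valence_grammar NM V T :=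
  {| vg_rules := List.map (fun r => (r.1.1, r.1.2, (phi r.2 : NM))) (vg_rules G);
     vg_start := vg_start G |}.

Definition liftG (V T : finType) (G : valence_grammar NM V T) : valence_grammar M V T :=
  {| vg_rules := flat_map (fun r : prod (prod V (list (sum V T))) (mcar NM) =>
        match proj1_sig r.2 with Some x => [:: (r.1.1, r.1.2, x)] | None => [::] end)
        (vg_rules G);
     vg_start := vg_start G |}.

Lemma lang_equiv (V T : finType) (G : valence_grammar M V T) (H : valence_grammar NM V T) :
  vg_start G = vg_start H ->
  (forall A alpha x, In (A, alpha, x) (vg_rules G) -> In (A, alpha, (phi x : NM)) (vg_rules H)) ->
  (forall A alpha nu, In (A, alpha, nu) (vg_rules H) ->
     nu = zN \/ exists x, nu = phi x /\ In (A, alpha, x) (vg_rules G)) ->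
  forall w, vg_language G w <-> vg_language H w.
Proof.
move=> es hf hb w; rewrite /vg_language; split => h.
- have := @sim_fwd M NM phi phiM V T G H hf _ _ h => /=.
  by rewrite es.
- have h1 := clos_rt_rt1n _ _ _ _ h.
  have [m' [e1 e2]] := @sim_bwd M NM phi phiM V T G H zN nmul_z nmul_z' hb _ _ h1 uNz (munit M) erefl.
  move: e2 => /=; rewrite es -(phi_1 (esym e1)) //.
Qed.

End Constr.

Theorem corollary5 (M : AbsMonoid) :
  exists N : AbsMonoid,
    (simple_monoid N \/ zero_simple_monoid N) /\ same_Val_CF M N.
Proof.
exists (NM M); split; first by right; exact: NM_zs.
move=> T L; split.
- move=> [V [G hG]]; exists V, (@mapG M V T G) => w; rewrite hG; apply: lang_equiv => //.
  + move=> A alpha x hin; apply/in_map_iff; by exists (A, alpha, x).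
  + move=> A alpha nu /in_map_iff [[[A' al'] x] [[<- <- <-] hin]].
    by right; exists x.
- move=> [V [G hG]]; exists V, (@liftG M V T G) => w; rewrite hG; symmetry; apply: lang_equiv => //.
  + move=> A alpha x /in_flat_map [[[A' al'] nu] [hin]] /=.
    case: nu hin => [[y|] hy] hin //= [[<- <- <-]|//].
    by rewrite (@phiJ M _ hy).
  + move=> A alpha [[y|] hy] hin.
    * right; exists y; split; first by rewrite (@phiJ M _ hy).
      apply/in_flat_map; exists (A, alpha, exist _ (Some y) hy); split => //=; by left.
    * left; move: hin; by case: hy.
Qed.
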